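(* Let $\alpha_H$ be the harmonic partition and let $\mathcal L^{(\alpha_H)}_n$ and $\mathcal L_n$ be the sum-level sets of the alternating and the classical Lüroth maps, as in the context. Then \[\lim_{n\to\infty}\lambda(\mathcal L^{(\alpha_H)}_n)=\lim_{n\to\infty}\lambda(\mathcal L_n)=0.\]
   Context: $\lambda$ is Lebesgue measure on $\mathcal U=[0,1]$. The harmonic partition $\alpha_H=\{A_n\}$ has $A_n=(1/(n+1),1/n]$, so $a_n=1/(n(n+1))$, $t_n=1/n$. The alternating Lüroth map is $L_{\alpha_H}(x)=-n(n+1)x+(n+1)$ for $x\in A_n$, $L_{\alpha_H}(0)=0$; its cylinders are $C(\ell_1,\dots,\ell_k)=\{x: L_{\alpha_H}^{i-1}(x)\in A_{\ell_i},\ i=1,\dots,k\}$ and $\mathcal L^{(\alpha_H)}_n$ is the union of all $C(\ell_1,\dots,\ell_k)$, $k\in\mathbb N$, with $\sum_i\ell_i=n$. The classical Lüroth map is $L(x)=n(n+1)x-n$ for $x\in[1/(n+1),1/n)$, $n\ge2$, $L(x)=2x-1$ for $x\in[1/2,1]$, $L(0)=0$; with digit intervals $B_1=[1/2,1]$, $B_n=[1/(n+1),1/n)$ for $n\ge2$, its cylinders are $\{x:L^{i-1}(x)\in B_{\ell_i},\ i=1,\dots,k\}$ and $\mathcal L_n$ is the union of those cylinders with $\sum_i\ell_i=n$. *)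

(* Defs.v *)
From HB Require Import structures.
From mathcomp Require Import all_boot all_order all_algebra.
From mathcomp Require Import all_classical all_reals all_analysis.
Set Implicit Arguments. Unset Strict Implicit. Unset Printing Implicit Defensive.
Import Order.TTheory GRing.Theory Num.Theory.
Local Open Scope classical_set_scope.
Local Open Scope ring_scope.

Section Luroth.
Variable R : realType.

Definition harmA (n : nat) : set R :=
  [set x | (0 < n)%N /\ 1 / (n.+1)%:R < x /\ x <= 1 / n%:R].

Definition lurB (n : nat) : set R :=
  if n == 1%N then [set x | 1 / 2 <= x /\ x <= 1]
  else [set x | (1 < n)%N /\ 1 / (n.+1)%:R <= x /\ x < 1 / n%:R].

(* The digit of x: the (unique) n with x in the n-th interval, 0 if none. *)
Definition harm_digit (x : R) : nat := xget 0%N [set n | harmA n x].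
Definition lur_digit (x : R) : nat := xget 0%N [set n | lurB n x].

Definition altL (x : R) : R :=
  let n := harm_digit x in
  if n == 0%N then 0 else - ((n * n.+1)%:R * x) + n.+1%:R.

Definition clL (x : R) : R :=
  let n := lur_digit x in
  if n == 0%N then 0 else (n * n.+1)%:R * x - n%:R.

Definition cylinder (T : R -> R) (I : nat -> set R) (l : seq nat) : set R :=
  [set x | forall i, (i < size l)%N -> I (nth 0%N l i) (iter i T x)].

Definition sum_level (T : R -> R) (I : nat -> set R) (n : nat) : set R :=
  \bigcup_(l in [set l : seq nat | (0 < size l)%N /\ all (fun a => 0 < a)%N l
                                   /\ sumn l = n]) cylinder T I l.

Definition altSumLevel (n : nat) : set R := sum_level altL harmA n.
Definition clSumLevel (n : nat) : set R := sum_level clL lurB n.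

End Luroth.

(* Main.v *)
Require Import Defs.
From HB Require Import structures.
From mathcomp Require Import all_boot all_order all_algebra.
From mathcomp Require Import all_classical all_reals all_analysis.
From mathcomp Require Import ring lra.
Import Order.TTheory GRing.Theory Num.Theory.
Local Open Scope classical_set_scope.
Local Open Scope ring_scope.

Section Key.
Variable R : realType.
Lemma key (K M : R) : 0 <= K -> 0 <= M -> K <= M + 1 ->
  (K + 1 + 1)^-1 - (M + 1 + 1 + 1)^-1 / (M + 1 + 1)^-1 * (K + 1)^-1 <= 0.
Proof.
move=> K0 M0 KM.
have h1 : K + 1 != 0.
  by apply: lt0r_neq0; lra.
have h2 : K + 1 + 1 != 0 by apply: lt0r_neq0; lra.
have h3 : M + 1 + 1 != 0 by apply: lt0r_neq0; lra.
have h4 : M + 1 + 1 + 1 != 0 by apply: lt0r_neq0; lra.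
rewrite invrK.
have -> : (K + 1 + 1)^-1 - (M + 1 + 1 + 1)^-1 * (M + 1 + 1) * (K + 1)^-1
  = (K - M - 1) / ((K + 1 + 1) * (M + 1 + 1 + 1) * (K + 1)).
  by field; rewrite ?h1 ?h2 ?h3 ?h4.
apply: mulr_le0_ge0; first lra.
rewrite invr_ge0; apply: mulr_ge0; first apply: mulr_ge0; lra.
Qed.
End Key.

Section Gen.
Variable R : realType.

Definition pp (k : nat) : R := ((k * k.+1)%:R)^-1.
Definition prodp (l : seq nat) : R := \prod_(k <- l) pp k.

Fixpoint compsF (f n : nat) : seq (seq nat) :=
  match f with
  | 0 => if n == 0%N then [:: [::]] else [::]
  | f'.+1 => if n == 0%N then [:: [::]] else
      flatten [seq [seq (n - j)%N :: l | l <- compsF f' j] | j <- iota 0 n]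
  end.

Fixpoint vF (f n : nat) : R :=
  match f with
  | 0 => (n == 0%N)%:R
  | f'.+1 => if n == 0%N then 1 else \sum_(j < n) pp (n - j) * vF f' j
  end.

Lemma sum_comps f n : \sum_(l <- compsF f n) prodp l = vF f n.
Proof.
elim: f n => [|f IH] n /=.
  by case: (n == 0%N); rewrite ?big_seq1 ?big_nil /prodp ?big_nil.
case: (n == 0%N); first by rewrite big_seq1 /prodp big_nil.
rewrite big_flatten big_map /= -(big_mkord xpredT (fun j => pp (n - j) * vF f j)).
rewrite /index_iota subn0; apply: eq_bigr => j _.
by rewrite big_map -IH mulr_sumr; apply: eq_bigr => l _; rewrite /prodp big_cons.
Qed.

Lemma size_le_sumn l : all (fun a => 0 < a)%N l -> (size l <= sumn l)%N.
Proof.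
elim: l => //= a l IH /andP[a0 /IH]; rewrite -addn1 addnC; exact: leq_add.
Qed.

Lemma comps_complete f l : (size l <= f)%N -> all (fun a => 0 < a)%N l ->
  l \in compsF f (sumn l).
Proof.
elim: f l => [|f IH] [|k l] //=; try by rewrite ?mem_seq1 ?inE.
move=> sl /andP[k0 pl].
have -> : (k + sumn l == 0)%N = false by rewrite addn_eq0 eqn0Ngt k0.
apply/flatten_mapP; exists (sumn l).
  by rewrite mem_iota add0n /=; rewrite -{1}(add0n (sumn l)) ltn_add2r.
have -> : (k + sumn l - sumn l = k)%N by rewrite addnK.
by apply: map_f; apply: IH.
Qed.

Variables (T : R -> R) (I : nat -> set R) (g : nat -> R -> R -> R * R).
Hypothesis HI : forall k x, I k x -> [/\ (0 < k)%N, 0 <= x <= 1, 0 <= T x <= 1 &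
  forall a b, a <= T x -> T x <= b -> (g k a b).1 <= x /\ x <= (g k a b).2].
Hypothesis Hg : forall k (a b : R), (0 < k)%N -> a <= b ->
  (g k a b).1 <= (g k a b).2 /\ (g k a b).2 - (g k a b).1 = pp k * (b - a).

Definition J (l : seq nat) : R * R := foldr (fun k ab => g k ab.1 ab.2) (0, 1) l.

Lemma J_len l : all (fun a => 0 < a)%N l ->
  (J l).1 <= (J l).2 /\ (J l).2 - (J l).1 = prodp l.
Proof.
elim: l => [|k l IH] /=; first by rewrite /prodp big_nil; split; lra.
move=> /andP[k0 /IH [le e]]; have [le' e'] := Hg _ _ _ k0 le.
by split=> //; rewrite e' e /prodp big_cons.
Qed.

Lemma cyl_J l x : 0 <= x <= 1 -> cylinder T I l x -> (J l).1 <= x <= (J l).2.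
Proof.
elim: l x => [|k l IH] x /=; first by [].
move=> _ cx.
have /HI [k0 x01 Tx01 Hk] := cx 0%N isT.
have cT : cylinder T I l (T x).
  move=> i il; have := cx i.+1 il; rewrite /= -iterSr; exact.
have /andP[h1 h2] := IH _ Tx01 cT.
by have [-> ->] := Hk _ _ h1 h2.
Qed.

Lemma sum_level_sub n : sum_level T I n `<=`
  \big[setU/set0]_(l <- compsF n n) `[(J l).1, (J l).2]%classic.
Proof.
move=> x [l [sl [pl sn]] cx].
have ln : l \in compsF n n.
  rewrite -{2}sn; apply: comps_complete => //; rewrite -sn; exact: size_le_sumn.
have x01 : 0 <= x <= 1.
  case: l sl pl sn cx ln => // k l _ _ _ cx _.
  by have /HI [] := cx 0%N isT.
have := @cyl_J l x x01 cx.
rewrite (perm_big _ (perm_to_rem ln)) big_cons => hx.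
by left; rewrite /= in_itv /=.
Qed.

Lemma mu_bigU (s : seq (seq nat)) : all (all (fun a => 0 < a)%N) s ->
  ((@lebesgue_measure R) (\big[setU/set0]_(l <- s) `[(J l).1, (J l).2]%classic)
    <= (\sum_(l <- s) prodp l)%:E)%E.
Proof.
elim: s => [|l s IH] /=; first by rewrite !big_nil measure0.
move=> /andP[pl /IH h]; rewrite !big_cons EFinD.
apply: le_trans; first exact: outer_measureU2.
apply: leeD => //.
have [le e] := @J_len l pl.
change ((@lebesgue_measure R) `[(J l).1, (J l).2]%classic <= (prodp l)%:E)%E.
rewrite (lebesgue_measure_itv `[(J l).1, (J l).2]) /=; case: ifP => _; rewrite -?EFinD ?e //.
by rewrite lee_fin -e subr_ge0.
Qed.

End Gen.

Section Ana.
Variable R : realType.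
Local Notation pp := (@pp R).
Local Notation vF := (@vF R).

Lemma vF_stable f g n : (n <= f)%N -> (n <= g)%N -> vF f n = vF g n.
Proof.
elim: f g n => [|f IH] g n.
  rewrite leqn0 => /eqP -> _; by case: g.
case: n => [|n] /=; first by case: g.
case: g => [//|g] /= nf ng; apply: eq_bigr => j _; congr (_ * _).
apply: IH; rewrite -ltnS; apply: leq_trans (ltn_ord j) _ => //.
Qed.

Definition v n := vF n n.

Lemma v0 : v 0 = 1. Proof. by []. Qed.

Lemma v_ren n : v n.+1 = \sum_(j < n.+1) pp (n.+1 - j) * v j.
Proof.
rewrite /v /=; apply: eq_bigr => j _; congr (_ * _).
by apply: vF_stable => //; rewrite -ltnS.
Qed.

Lemma pp_ge0 k : 0 <= pp k.
Proof. by rewrite /pp invr_ge0 ler0n. Qed.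

Lemma vF_ge0 f m : 0 <= vF f m.
Proof.
elim: f m => [|f IH] m /=; first by case: (m == 0%N).
case: ifP => // _; apply: sumr_ge0 => j _; apply: mulr_ge0 => //; exact: pp_ge0.
Qed.

Lemma v_ge0 n : 0 <= v n.
Proof. exact: vF_ge0. Qed.

Definition r (k : nat) : R := (k.+1%:R)^-1.

Lemma pp_r k : pp k.+1 = r k - r k.+1.
Proof.
rewrite /pp /r natrM -[k.+2%:R]natr1.
have ha : (k.+1%:R : R) != 0 by rewrite pnatr_eq0.
have hb : (k.+1%:R + 1 : R) != 0 by rewrite natr1 pnatr_eq0.
by field; rewrite -!(addrC 1) !nat1r !pnatr_eq0.
Qed.

Definition Sv n := \sum_(j < n.+1) r (n - j) * v j.

Lemma S1 n : Sv n = 1.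
Proof.
elim: n => [|n IH]; first by rewrite /Sv big_ord1 /r v0 subn0 mulr1 invr1.
rewrite /Sv big_ord_recr /= subnn.
have -> : \sum_(i < n.+1) r (n.+1 - i) * v i =
          Sv n - \sum_(i < n.+1) pp (n.+1 - i) * v i.
  rewrite /Sv -sumrB; apply: eq_bigr => i _.
  have hi : (i <= n)%N by rewrite -ltnS.
  by rewrite subSn // pp_r; ring.
by rewrite IH -v_ren /r invr1 mul1r subrK.
Qed.

Definition b j := if j is j'.+1 then v j'.+1 - v j' else 1.

Lemma Eid n : \sum_(j < n.+2) r (n.+1 - j) * b j = 0.
Proof.
have h1 : r n.+1 + \sum_(j < n.+1) r (n - j) * v j.+1 = 1.
  rewrite -(S1 n.+1) /Sv [RHS]big_ord_recl (v0 : v (@ord0 n.+1) = 1) mulr1 subn0; congr (_ + _).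
have h2 := S1 n; rewrite /Sv in h2.
rewrite big_ord_recl /= subn0 mulr1.
under eq_bigr => j _ do rewrite /bump leq0n add1n add0n subSS mulrBr.
by rewrite sumrB addrA h1 h2 subrr.
Qed.





Lemma r0 : r 0 = 1. Proof. by rewrite /r invr1. Qed.

Lemma r_neq0 k : r k != 0.
Proof. by rewrite /r invr_eq0 pnatr_eq0. Qed.

Lemma b_le0 n : (0 < n)%N -> b n <= 0.
Proof.
elim/ltn_ind: n => -[//|[|m]] IH _.
  rewrite /b (v_ren 0) big_ord1 /= (v0 : v (@ord0 0) = 1) mulr1 /pp.
  by rewrite subr_le0 invf_le1 // ler1n.
set c := r m.+2 / r m.+1.
have e1 := Eid m.+1; have e2 := Eid m.
rewrite big_ord_recr /= subnn r0 mul1r in e1.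
have -> : b m.+2 = - \sum_(j < m.+2) r (m.+2 - j) * b j.
  by apply/eqP; rewrite -addr_eq0 addrC e1.
have -> : \sum_(j < m.+2) r (m.+2 - j) * b j =
    \sum_(j < m.+2) (r (m.+2 - j) - c * r (m.+1 - j)) * b j.
  under [RHS]eq_bigr => j _ do rewrite mulrBl -mulrA.
  by rewrite sumrB -mulr_sumr e2 mulr0 subr0.
rewrite oppr_le0; apply: sumr_ge0 => -[[|j] hj] _ /=.
  by rewrite subn0 /c divfK ?r_neq0 // subrr mul0r.
apply: mulr_le0; last exact: (IH _ hj).
have hj' : (j <= m)%N by rewrite -ltnS.
rewrite /c subSS (subSn hj') /r -!natr1.
apply: key; rewrite ?ler0n //.
by rewrite natr1 ler_nat (leq_trans (leq_subr _ _)).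
Qed.

End Ana.

Section Main.
Variable R : realType.
Local Notation v := (@v R).

Lemma v_mono n : v n.+1 <= v n.
Proof. by have := @b_le0 R n.+1 isT; rewrite /b subr_le0. Qed.

Lemma v_le j n : (j <= n)%N -> v n <= v j.
Proof.
elim: n => [|n IH]; first by rewrite leqn0 => /eqP ->.
rewrite leq_eqVlt => /orP[/eqP -> //|]; rewrite ltnS => /IH.
exact: le_trans (v_mono n).
Qed.

Definition H n : R := series harmonic n.+1.

Lemma H_gt0 n : 0 < H n.
Proof.
rewrite /H /series /= big_nat_recl // ltr_pwDl ?harmonic_gt0 //.
by apply: sumr_ge0 => i _; apply: harmonic_ge0.
Qed.

Lemma v_H n : v n <= (H n)^-1.
Proof.
rewrite -[_^-1]mul1r ler_pdivlMr ?H_gt0 //.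
rewrite -(S1 R n) /Sv /H /series /= big_mkord mulr_sumr.
rewrite (reindex_inj rev_ord_inj) /=; apply: ler_sum => i _.
rewrite subSS mulrC /r; apply: ler_wpM2l.
  by rewrite invr_ge0 ler0n.
by apply: v_le; rewrite -ltnS.
Qed.

Lemma Hinv_cvg : (fun n => (H n)^-1) @ \oo --> 0.
Proof.
apply/gtr0_cvgV0; first by apply: nearW => n; apply: H_gt0.
rewrite /H; have := @nondecreasing_dvgn_lt R (series harmonic).
move=> /(_ _ (@dvg_harmonic R)) h.
have h2 : series (@harmonic R) @ \oo --> +oo.
  by apply: h; apply: nondecreasing_series => n _ _; apply: harmonic_ge0.
apply: (cvg_comp _ _ _ h2).
have := @cvg_addnr 1; apply: cvg_trans; apply: near_eq_cvg; apply: nearW => k /=.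
by rewrite addn1.
Qed.

End Main.

Lemma comps_pos f n : all (all (fun a => 0 < a)%N) (compsF f n).
Proof.
elim: f n => [|f IH] n /=; first by case: (n == 0%N).
case: ifP => // n0; apply/allP => l /flatten_mapP [j].
rewrite mem_iota add0n => /andP[_ jn] /mapP [l' hl' ->] /=.
by rewrite subn_gt0 jn /=; move/allP: (IH j) => /(_ _ hl').
Qed.

Lemma leb_mono (R : realType) (A B : set R) : A `<=` B ->
  (@lebesgue_measure R A <= @lebesgue_measure R B)%E.
Proof.
move=> h; rewrite /lebesgue_measure /lebesgue_stieltjes_measure /measure_extension.
exact: le_mu_ext.
Qed.

Section Final.
Variable R : realType.
Variables (T : R -> R) (I : nat -> set R) (g : nat -> R -> R -> R * R).
Hypothesis HI : forall k x, I k x -> [/\ (0 < k)%N, 0 <= x <= 1, 0 <= T x <= 1 &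
  forall a b, a <= T x -> T x <= b -> (g k a b).1 <= x /\ x <= (g k a b).2].
Hypothesis Hg : forall k (a b : R), (0 < k)%N -> a <= b ->
  (g k a b).1 <= (g k a b).2 /\ (g k a b).2 - (g k a b).1 = @pp R k * (b - a).

Lemma sum_level_cvg :
  (fun n => (@lebesgue_measure R) (sum_level T I n)) @ \oo --> 0%E.
Proof.
apply: (@squeeze_cvge _ _ _ _ (cst 0%E) _ (EFin \o (fun n => (H R n)^-1))).
- apply: nearW => n; apply/andP; split; first exact: measure_ge0.
  set U := \big[setU/set0]_(l <- compsF n n) `[(@J R g l).1, (@J R g l).2]%classic.
  have h1 : ((@lebesgue_measure R) (sum_level T I n) <= (@lebesgue_measure R) U)%E.
    have h := @leb_mono R _ _ (@sum_level_sub R T I g HI n).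
    exact h.
  have h2 := @mu_bigU R g Hg _ (comps_pos n n).
  rewrite sum_comps in h2.
  apply: (le_trans h1); apply: (le_trans h2).
  by rewrite lee_fin; exact: v_H.
- exact: cvg_cst.
- apply: cvg_EFin; [exact: nearW | exact: Hinv_cvg].
Qed.

End Final.

Section Inst.
Variable R : realType.

Lemma harm_facts k (x : R) : harmA k x ->
  [/\ (0 < k)%N, 1 < x * k.+1%:R & x * k%:R <= 1].
Proof.
move=> [k0 [h1 h2]]; split => //.
  by rewrite -ltr_pdivrMr // ltr0n.
by rewrite -ler_pdivlMr // ltr0n.
Qed.

Lemma harm_digitE k (x : R) : harmA k x -> harm_digit x = k.
Proof.
move=> hk; apply: xget_unique => // m hm.
have [m0 m1 m2] := @harm_facts m x hm; have [k0 k1 k2] := @harm_facts k x hk.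
have x0 : 0 < x by nra.
apply/eqP; rewrite eqn_leq; apply/andP; split; rewrite leqNgt; apply/negP => lt.
  have : (k.+1%:R <= m%:R :> R) by rewrite ler_nat.
  nra.
have : (m.+1%:R <= k%:R :> R) by rewrite ler_nat.
nra.
Qed.

Definition gH (k : nat) (y : R) : R := (k.+1%:R - y) / (k * k.+1)%:R.

Lemma HI_alt k x : harmA k x -> [/\ (0 < k)%N, 0 <= x <= 1, 0 <= altL x <= 1 &
  forall a b, a <= altL x -> altL x <= b ->
    ((gH k b, gH k a) : R * R).1 <= x /\ x <= ((gH k b, gH k a) : R * R).2].
Proof.
move=> hk; have [k0 k1 k2] := @harm_facts k x hk.
rewrite /altL (@harm_digitE k x hk).
have -> : (k == 0%N) = false by case: k k0 {hk k1 k2}.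
have K1 : (1 <= k%:R :> R) by rewrite ler1n.
rewrite natrM -natr1 in k1 *.
set K := k%:R in K1 k1 k2 *.
have x0 : 0 < x by nra.
split => //.
- apply/andP; split; nra.
- apply/andP; split; nra.
have hc : 0 < (K * (K + 1))^-1 by rewrite invr_gt0; nra.
have hx : x = gH k (- (K * (K + 1) * x) + (K + 1)).
  rewrite /gH natrM -natr1 -/K; field.
  apply/andP; split; apply: lt0r_neq0; nra.
move=> a b ha hb /=; rewrite {1 2}hx /gH natrM -natr1 -/K.
split; apply: ler_wpM2r; try exact: ltW; lra.
Qed.

Lemma Hg_alt k (a b : R) : (0 < k)%N -> a <= b ->
  ((gH k b, gH k a) : R * R).1 <= ((gH k b, gH k a) : R * R).2 /\
  ((gH k b, gH k a) : R * R).2 - ((gH k b, gH k a) : R * R).1 = pp R k * (b - a).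
Proof.
move=> k0 ab /=; rewrite /gH /pp; split.
  apply: ler_wpM2r; [by rewrite invr_ge0 ler0n | lra].
by rewrite -mulrBl mulrC; congr (_ * _); ring.
Qed.


Lemma lur_facts k (x : R) : lurB k x ->
  [/\ (0 < k)%N, 1 <= x * k.+1%:R, x * k%:R <= 1 & (1 < k)%N -> x * k%:R < 1].
Proof.
rewrite /lurB; case: eqP => [-> [h1 h2]|_ [k1 [h1 h2]]].
  by split => //; lra.
split => //; first by apply: ltnW.
- by rewrite -ler_pdivrMr // ltr0n.
- by rewrite -ler_pdivlMr ?ltW // ltr0n ltnW.
- by rewrite -ltr_pdivlMr // ltr0n ltnW.
Qed.

Lemma lur_digitE k (x : R) : lurB k x -> lur_digit x = k.
Proof.
move=> hk; apply: xget_unique => // m hm.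
have [m0 m1 m2 m3] := @lur_facts m x hm; have [k0 k1 k2 k3] := @lur_facts k x hk.
have x0 : 0 < x by have := ler0n R m.+1; nra.
apply/eqP; rewrite eqn_leq; apply/andP; split; rewrite leqNgt; apply/negP => lt.
  have : (k.+1%:R <= m%:R :> R) by rewrite ler_nat.
  have := m3 (leq_ltn_trans k0 lt).
  nra.
have : (m.+1%:R <= k%:R :> R) by rewrite ler_nat.
have := k3 (leq_ltn_trans m0 lt).
nra.
Qed.

Definition gC (k : nat) (y : R) : R := (y + k%:R) / (k * k.+1)%:R.

Lemma HI_cl k x : lurB k x -> [/\ (0 < k)%N, 0 <= x <= 1, 0 <= clL x <= 1 &
  forall a b, a <= clL x -> clL x <= b ->
    ((gC k a, gC k b) : R * R).1 <= x /\ x <= ((gC k a, gC k b) : R * R).2].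
Proof.
move=> hk; have [k0 k1 k2 _] := @lur_facts k x hk.
rewrite /clL (@lur_digitE k x hk).
have -> : (k == 0%N) = false by case: k k0 {hk k1 k2}.
have K1 : (1 <= k%:R :> R) by rewrite ler1n.
rewrite natrM -natr1 in k1 *.
set K := k%:R in K1 k1 k2 *.
have x0 : 0 < x by nra.
split => //.
- apply/andP; split; nra.
- apply/andP; split; nra.
have hc : 0 < (K * (K + 1))^-1 by rewrite invr_gt0; nra.
have hx : x = gC k (K * (K + 1) * x - K).
  rewrite /gC natrM -natr1 -/K; field.
  apply/andP; split; apply: lt0r_neq0; nra.
move=> a b ha hb /=; rewrite {1 2}hx /gC natrM -natr1 -/K.
split; apply: ler_wpM2r; try exact: ltW; lra.
Qed.

Lemma Hg_cl k (a b : R) : (0 < k)%N -> a <= b ->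
  ((gC k a, gC k b) : R * R).1 <= ((gC k a, gC k b) : R * R).2 /\
  ((gC k a, gC k b) : R * R).2 - ((gC k a, gC k b) : R * R).1 = pp R k * (b - a).
Proof.
move=> k0 ab /=; rewrite /gC /pp; split.
  apply: ler_wpM2r; [by rewrite invr_ge0 ler0n | lra].
by rewrite -mulrBl mulrC; congr (_ * _); ring.
Qed.

End Inst.

Theorem corollary5p1 (R : realType) :
  (fun n : nat => (@lebesgue_measure R) (@altSumLevel R n)) @ \oo --> 0%E /\
  (fun n : nat => (@lebesgue_measure R) (@clSumLevel R n)) @ \oo --> 0%E.
Proof.
split.
  exact: (@sum_level_cvg R (@altL R) (@harmA R) (fun k a b => (@gH R k b, @gH R k a))
    (@HI_alt R) (@Hg_alt R)).
exact: (@sum_level_cvg R (@clL R) (@lurB R) (fun k a b => (@gC R k a, @gC R k b))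
  (@HI_cl R) (@Hg_cl R)).
Qed.
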